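(* Let $\ell$ be a prime number and $n\ge1$. Then the number $s_{\ell,n}$ of switching equivalence classes in $\mathrm{Alt}_n(\mathbb{Z}/\ell\mathbb{Z})$ equals the number $t_{\ell,n}$ of isomorphism classes of modular Eulerian matrices in $\mathrm{Alt}_n(\mathbb{Z}/\ell\mathbb{Z})$.
   Context: $\mathrm{Alt}_n(\mathbb{Z}/\ell\mathbb{Z})$ is the set of $n\times n$ matrices $M=(m_{ij})$ over $\mathbb{Z}/\ell\mathbb{Z}$ with $m_{ii}=0$ and $m_{ij}+m_{ji}=0$. For $v\in[n]$ let $X_v$ be the matrix with $(X_v)_{iv}=1$ and $(X_v)_{vi}=-1$ for all $i\ne v$ and all other entries $0$; the switching at $v$ is $\mu_v(M)=M+X_v$. $M\cong M'$ means there is $\sigma\in\mathfrak{S}_n$ with $m'_{\sigma(i)\sigma(j)}=m_{ij}$ for all $i,j$. $M,M'$ are switching equivalent if there are positive integers $i_1,\dots,i_n$ with $M'\cong\mu_1^{i_1}\cdots\mu_n^{i_n}(M)$. $M$ is a modular Eulerian matrix if $\sum_{j=1}^n m_{ij}=0$ in $\mathbb{Z}/\ell\mathbb{Z}$ for every $i$. *)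

(* Defs.v *)
From Stdlib Require Import ClassicalEpsilon.
From mathcomp Require Import all_boot all_order all_algebra all_fingroup.
Set Implicit Arguments. Unset Strict Implicit. Unset Printing Implicit Defensive.
Import GRing.Theory.
Local Open Scope ring_scope.

(* Matrices over Z/lZ are 'M['Z_l]_n; for l prime (l >= 2) 'Z_l is Z/lZ. *)

Definition is_alt (l n : nat) (M : 'M['Z_l]_n) : bool :=
  [forall i, M i i == 0] && [forall i, forall j, M i j + M j i == 0].

Definition Xsw (l n : nat) (v : 'I_n) : 'M['Z_l]_n :=
  \matrix_(i, j) (if (j == v) && (i != v) then 1
                  else if (i == v) && (j != v) then -1 else 0).

Definition mu (l n : nat) (v : 'I_n) (M : 'M['Z_l]_n) : 'M['Z_l]_n :=
  M + Xsw l v.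

Definition switch_all (l n : nat) (k : 'I_n -> nat) (M : 'M['Z_l]_n) :=
  foldr (fun v N => iter (k v) (@mu l n v) N) M (enum 'I_n).

Definition mx_iso (l n : nat) (M M' : 'M['Z_l]_n) : Prop :=
  exists s : 'S_n, forall i j, M' (s i) (s j) = M i j.

Definition switch_equiv (l n : nat) (M M' : 'M['Z_l]_n) : Prop :=
  exists k : 'I_n -> nat, (forall v, (0 < k v)%N) /\ mx_iso (switch_all k M) M'.

Definition is_eulerian (l n : nat) (M : 'M['Z_l]_n) : bool :=
  [forall i, \sum_j M i j == 0].

Definition asb (P : Prop) : bool :=
  if excluded_middle_informative P then true else false.

Definition s_count (l n : nat) : nat :=
  #|[set [set M' : 'M['Z_l]_n | is_alt M' && asb (switch_equiv M M')]
     | M in [set M : 'M['Z_l]_n | is_alt M]]|.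

Definition t_count (l n : nat) : nat :=
  #|[set [set M' : 'M['Z_l]_n | is_alt M' && is_eulerian M' && asb (mx_iso M M')]
     | M in [set M : 'M['Z_l]_n | is_alt M && is_eulerian M]]|.

(* Main.v *)
From Stdlib Require Import ClassicalEpsilon.
Require Import Defs.
From mathcomp Require Import all_boot all_order all_algebra all_fingroup.
From mathcomp Require Import zify.
Set Implicit Arguments. Unset Strict Implicit. Unset Printing Implicit Defensive.
Import GRing.Theory.
Local Open Scope ring_scope.

Section LA.
Variable F : finFieldType.

Lemma card_rs m k (C : 'M[F]_(k, m)) :
  #|[set x : 'rV[F]_m | (x <= C)%MS]| = (#|F| ^ \rank C)%N.
Proof.
have -> : [set x : 'rV[F]_m | (x <= C)%MS] =
          [set y *m row_base C | y in [set: 'rV[F]_(\rank C)]].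
  apply/setP => x; rewrite inE; apply/idP/imsetP.
    move=> xC; have: (x <= row_base C)%MS by rewrite eq_row_base.
    by case/submxP=> y ->; exists y; rewrite ?inE.
  by move=> [y _ ->]; rewrite -(eq_row_base C) submxMl.
rewrite card_imset; last exact: row_free_inj (row_base_free C).
by rewrite cardsT card_mx mul1n.
Qed.

Lemma kermx_coker m k (B : 'M[F]_(k, m)) : (kermx (cokermx B) :=: B)%MS.
Proof.
apply/eqmxP; apply/andP; split; apply/rV_subP => v.
  by rewrite sub_kermx submxE.
by rewrite sub_kermx submxE.
Qed.

Lemma LA m k (P : 'M[F]_m) (B : 'M[F]_(k, m)) : P^T *m P = 1 ->
  #|[set x : 'rV[F]_m | (x *m (1 - P) <= B)%MS]| =
  (#|[set x : 'rV[F]_m | (x <= B)%MS]| *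
   #|[set x : 'rV[F]_m | (x *m P == x) && (x *m B^T == 0%R)]|)%N.
Proof.
move=> PP; set T := 1 - P.
have -> : [set x : 'rV[F]_m | (x *m T <= B)%MS] =
          [set x : 'rV[F]_m | (x <= kermx (T *m cokermx B))%MS].
  by apply/setP => x; rewrite !inE sub_kermx submxE -mulmxA.
have -> : [set x : 'rV[F]_m | (x *m P == x) && (x *m B^T == 0)] =
          [set x : 'rV[F]_m | (x <= kermx (row_mx T B^T))%MS].
  apply/setP => x; rewrite !inE sub_kermx mul_mx_row row_mx_eq0.
  by rewrite /T mulmxBr mulmx1 subr_eq0 eq_sym.
rewrite !card_rs !mxrank_ker -expnD; congr (_ ^ _)%N.
have h1 := mxrank_mul_ker T (cokermx B).
rewrite (cap_eqmx (eqmx_refl T) (kermx_coker B)) in h1.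
have h2 := mxrank_sum_cap T B.
have sTt : (T^T <= T)%MS.
  have -> : T^T = (- P^T) *m T.
    by rewrite /T mulNmx mulmxBr mulmx1 PP opprB linearB /= trmx1.
  exact: submxMl.
have eTt : (T^T == T)%MS.
  by apply/andP; split=> //; rewrite -(mxrank_leqif_sup sTt).2 mxrank_tr.
have h3 : \rank (row_mx T B^T) = \rank (T + B)%MS.
  rewrite -mxrank_tr tr_row_mx trmxK -addsmxE.
  by rewrite (adds_eqmx (eqmxP eTt) (eqmx_refl B)).
have h4 := rank_leq_row (row_mx T B^T).
rewrite h3; move: h1 h2 h4; rewrite h3.
set a := \rank (T *m _); set b := \rank (T :&: B)%MS; set c := \rank (T + B)%MS; set d := \rank T; set e := \rank B.
clearbody a b c d e; move=> H1 H2 H4; lia.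
Qed.
End LA.


Section Coord.
Variables p n : nat.
Local Notation F := 'Z_(pdiv p).

Definition Pset := [set q : 'I_n * 'I_n | (q.1 < q.2)%N].
Local Notation N := #|Pset|.
Definition pv (k : 'I_N) : 'I_n * 'I_n := enum_val k.
Lemma pvP k : ((pv k).1 < (pv k).2)%N.
Proof. by have := enum_valP k; rewrite inE. Qed.

Definition ee (k : 'I_N) (i j : 'I_n) : F :=
  (pv k == (i, j))%:R - (pv k == (j, i))%:R.
Definition mtx (x : 'rV[F]_N) : 'M[F]_n := \matrix_(i, j) \sum_k x 0 k * ee k i j.
Definition crd (M : 'M[F]_n) : 'rV[F]_N := \row_k M (pv k).1 (pv k).2.

Definition Ssum (x : 'rV[F]_N) q := \sum_k x 0 k * (pv k == q)%:R.

Lemma mtxE x i j : mtx x i j = Ssum x (i, j) - Ssum x (j, i).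
Proof.
by rewrite mxE /Ssum -sumrB; apply: eq_bigr => k _; rewrite /ee mulrBr.
Qed.

Lemma Ssum_in x q (qP : q \in Pset) : Ssum x q = x 0 (enum_rank_in qP q).
Proof.
rewrite /Ssum (bigD1 (enum_rank_in qP q)) //= /pv enum_rankK_in // eqxx mulr1.
rewrite big1 ?addr0 // => k kq; case: eqP; rewrite ?mulr0 // => E.
by case/eqP: kq; apply: enum_val_inj; rewrite enum_rankK_in.
Qed.

Lemma Ssum_out x q : q \notin Pset -> Ssum x q = 0.
Proof.
move=> qP; rewrite /Ssum big1 // => k _; case: eqP; rewrite ?mulr0 // => E.
by case/negP: qP; rewrite -E enum_valP.
Qed.

Lemma crdK x : crd (mtx x) = x.
Proof.
apply/rowP => k; rewrite mxE mtxE.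
have kP : pv k \in Pset by exact: enum_valP.
rewrite -surjective_pairing (Ssum_in x kP) /pv enum_valK_in.
rewrite Ssum_out ?subr0 // inE /= -leqNgt ltnW //; exact: pvP.
Qed.

Lemma mtx_inj : injective mtx.
Proof. exact: can_inj crdK. Qed.

Lemma isaltP (M : 'M[F]_n) :
  reflect ((forall i, M i i = 0) /\ (forall i j, M i j + M j i = 0)) (is_alt M).
Proof.
apply: (iffP andP) => [[/forallP h1 /forallP h2] | [h1 h2]]; split.
- by move=> i; apply/eqP.
- by move=> i j; apply/eqP; have /forallP := h2 i; apply.
- by apply/forallP => i; rewrite h1.
- by apply/forallP => i; apply/forallP => j; rewrite h2.
Qed.

Lemma alt_mtx x : is_alt (mtx x).
Proof.
apply/isaltP; split=> [i|i j]; rewrite !mtxE ?subrr //.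
by rewrite addrC subrKA subrr.
Qed.

Lemma mtxK M : is_alt M -> mtx (crd M) = M.
Proof.
case/isaltP => h1 h2; apply/matrixP => i j; rewrite mtxE.
have [ij|ji|/val_inj->] := ltngtP i j.
- have qP : (i, j) \in Pset by rewrite inE.
  rewrite (Ssum_in _ qP) Ssum_out ?subr0; last by rewrite inE /= -leqNgt ltnW.
  by rewrite mxE /pv enum_rankK_in.
- have qP : (j, i) \in Pset by rewrite inE.
  rewrite (Ssum_in _ qP) Ssum_out ?sub0r; last by rewrite inE /= -leqNgt ltnW.
  rewrite mxE /pv enum_rankK_in //=; apply/eqP; rewrite eq_sym -addr_eq0.
  by rewrite addrC h2.
- by rewrite subrr h1.
Qed.
End Coord.


Section Act.
Variables p n : nat.
Local Notation F := 'Z_(pdiv p).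
Local Notation N := #|Pset n|.
Local Notation pv := (@pv n).
Local Notation mtx := (@mtx p n).
Local Notation crd := (@crd p n).

Definition pact (M : 'M[F]_n) (s : {perm 'I_n}) : 'M[F]_n :=
  \matrix_(i, j) M ((s^-1)%g i) ((s^-1)%g j).

Lemma pact1 : pact^~ 1%g =1 id.
Proof. by move=> M; apply/matrixP => i j; rewrite mxE invg1 !perm1. Qed.

Lemma pactM M : act_morph pact M.
Proof.
by move=> a b; apply/matrixP => i j; rewrite !mxE invMg !permM.
Qed.

Definition actT := TotalAction pact1 pactM.

Lemma pact_alt M s : is_alt M -> is_alt (pact M s).
Proof.
case/isaltP => h1 h2; apply/isaltP; split=> [i|i j]; rewrite !mxE //.
Qed.

Lemma pactD M1 M2 s : pact (M1 + M2) s = pact M1 s + pact M2 s.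
Proof. by apply/matrixP => i j; rewrite !mxE. Qed.

Lemma pactN M s : pact (- M) s = - pact M s.
Proof. by apply/matrixP => i j; rewrite !mxE. Qed.

Lemma pactK M s : pact (pact M s) (s^-1)%g = M.
Proof. by rewrite -pactM mulgV pact1. Qed.

Lemma pactKV M s : pact (pact M (s^-1)%g) s = M.
Proof. by rewrite -pactM mulVg pact1. Qed.

Definition Pm (s : {perm 'I_n}) : 'M[F]_N :=
  \matrix_(k, k') ee p k ((s^-1)%g (pv k').1) ((s^-1)%g (pv k').2).

Lemma crd_pact x s : crd (pact (mtx x) s) = x *m Pm s.
Proof.
apply/rowP => k; rewrite !mxE; apply: eq_bigr => k' _; rewrite !mxE //.
Qed.

Lemma pact_mtx x s : pact (mtx x) s = mtx (x *m Pm s).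
Proof. by rewrite -crd_pact mtxK //; apply/pact_alt/alt_mtx. Qed.

Lemma Pm_tr s : (Pm s)^T = Pm (s^-1)%g.
Proof.
apply/matrixP => k k'; rewrite !mxE /ee invgK.
case: (pv k) (pv k') => [a b] [c d].
rewrite !xpair_eqE -!(canF_eq (permK s)).
by rewrite /= (eq_sym a) (eq_sym b) (eq_sym a (s d)) (eq_sym b (s c)) [(s d == a) && _]andbC.
Qed.

Lemma Pm_orth s : (Pm s)^T *m Pm s = 1.
Proof.
rewrite Pm_tr; apply/row_matrixP => k.
by rewrite row1 rowE mulmxA -crd_pact -pact_mtx pactKV crdK.
Qed.
End Act.


Section Sw.
Variables p n : nat.
Local Notation F := 'Z_(pdiv p).
Local Notation N := #|Pset n|.
Local Notation pv := (@pv n).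
Local Notation mtx := (@mtx p n).
Local Notation crd := (@crd p n).
Local Notation X := (@Xsw (pdiv p) n).

Lemma XE v i j : X v i j = (j == v)%:R - (i == v)%:R.
Proof.
rewrite mxE; case: (eqVneq j v) => jv; case: (eqVneq i v) => iv //=;
  by rewrite ?subrr ?subr0 ?sub0r // -jv iv.
Qed.

Lemma X_alt v : is_alt (X v).
Proof.
apply/isaltP; split=> [i|i j]; rewrite !XE ?subrr //.
by rewrite addrC subrKA subrr.
Qed.

Definition lin (c : 'rV[F]_n) : 'M[F]_n := \sum_v c 0 v *: X v.

Lemma linE c i j : lin c i j = \sum_v c 0 v * X v i j.
Proof. by rewrite /lin summxE; apply: eq_bigr => v _; rewrite mxE. Qed.

Lemma lin_alt c : is_alt (lin c).
Proof.
apply/isaltP; split=> [i|i j]; rewrite !linE.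
  by rewrite big1 // => v _; rewrite XE subrr mulr0.
rewrite -big_split big1 //= => v _; rewrite -mulrDr.
by case/isaltP: (X_alt v) => _ ->; rewrite mulr0.
Qed.

Definition Bm : 'M[F]_(n, N) := \matrix_(v, k) crd (X v) 0 k.

Lemma crd_lin c : crd (lin c) = c *m Bm.
Proof.
by apply/rowP => k; rewrite !mxE linE; apply: eq_bigr => v _; rewrite !mxE.
Qed.

Lemma crdD M1 M2 : crd (M1 + M2) = crd M1 + crd M2.
Proof. by apply/rowP => k; rewrite !mxE. Qed.
Lemma crdN M : crd (- M) = - crd M.
Proof. by apply/rowP => k; rewrite !mxE. Qed.

Lemma altD (M1 M2 : 'M[F]_n) : is_alt M1 -> is_alt M2 -> is_alt (M1 + M2).
Proof.
move=> /isaltP[a1 a2] /isaltP[b1 b2]; apply/isaltP; split=> [i|i j]; rewrite !mxE.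
  by rewrite a1 b1 addr0.
by rewrite addrACA a2 b2 addr0.
Qed.
Lemma altN (M : 'M[F]_n) : is_alt M -> is_alt (- M).
Proof.
move=> /isaltP[a1 a2]; apply/isaltP; split=> [i|i j]; rewrite !mxE.
  by rewrite a1 oppr0.
by rewrite -opprD a2 oppr0.
Qed.

Definition Wset := [set lin c | c : 'rV[F]_n].

Lemma W_alt w : w \in Wset -> is_alt w.
Proof. by case/imsetP => c _ ->; apply: lin_alt. Qed.

Lemma inW M : is_alt M -> (M \in Wset) = (crd M <= Bm)%MS.
Proof.
move=> aM; apply/imsetP/idP => [[c _ ->]|].
  by rewrite crd_lin submxMl.
case/submxP => c E; exists c => //.
by rewrite -(mtxK aM) -(mtxK (lin_alt c)) crd_lin E.
Qed.

Lemma WD w1 w2 : w1 \in Wset -> w2 \in Wset -> w1 + w2 \in Wset.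
Proof.
move=> h1 h2; have a1 := W_alt h1; have a2 := W_alt h2.
rewrite inW ?altD // crdD addmx_sub -?inW //.
Qed.

Lemma WN w : w \in Wset -> - w \in Wset.
Proof.
move=> h; have a := W_alt h.
by rewrite inW ?altN // crdN eqmx_opp -inW.
Qed.

Lemma W0 : 0 \in Wset.
Proof. by apply/imsetP; exists 0 => //; rewrite /lin big1 // => v _; rewrite mxE scale0r. Qed.

Lemma card_W : #|Wset| = #|[set x : 'rV[F]_N | (x <= Bm)%MS]|.
Proof.
rewrite -(card_in_imset (f := crd)); last first.
  by move=> M1 M2 /W_alt a1 /W_alt a2 E; rewrite -(mtxK a1) E mtxK.
congr (#|pred_of_set _|); apply/setP => x; rewrite inE; apply/imsetP/idP.
  by move=> [M MW ->]; rewrite -inW // W_alt.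
case/submxP => c ->; exists (lin c); first exact: imset_f.
by rewrite crd_lin.
Qed.

Lemma pact_X v s : pact (X v) s = X (s v).
Proof.
apply/matrixP => i j; rewrite mxE !XE.
by rewrite !(canF_eq (permKV s)).
Qed.

Lemma pact_W w s : w \in Wset -> pact w s \in Wset.
Proof.
case/imsetP => c _ ->; apply/imsetP; exists (\row_u c 0 ((s^-1)%g u)) => //.
apply/matrixP => i j; rewrite mxE !linE (reindex_inj (@perm_inj _ (s^-1)%g)) /=.
apply: eq_bigr => v _; rewrite mxE; congr (_ * _); by rewrite !XE !(inj_eq (@perm_inj _ _)).
Qed.

Lemma euler_mtx x : is_eulerian (mtx x) = (x *m Bm^T == 0).
Proof.
have key v : \sum_j mtx x v j = - (x *m Bm^T) 0 v.
  rewrite !mxE -sumrN.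
  under eq_bigr => j _ do rewrite mxE.
  rewrite exchange_big /=; apply: eq_bigr => k _.
  rewrite !mxE -mulrN -mulr_sumr; congr (_ * _).
  transitivity (- X v (pv k).1 (pv k).2); last by rewrite mxE.
  rewrite XE /ee; have := pvP k; case: (pv k) => [a b] /= ab.
  rewrite sumrB opprB.
  have s1 (u w : 'I_n) : \sum_(j < n) ((u, w) == (v, j))%:R = (u == v)%:R :> F.
    rewrite (bigD1 w) //= xpair_eqE eqxx andbT big1 ?addr0 // => j jw.
    by rewrite xpair_eqE [w == j]eq_sym (negbTE jw) andbF.
  have s2 (u w : 'I_n) : \sum_(j < n) ((u, w) == (j, v))%:R = (w == v)%:R :> F.
    rewrite (bigD1 u) //= xpair_eqE eqxx /= big1 ?addr0 // => j ju.
    by rewrite xpair_eqE [u == j]eq_sym (negbTE ju).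
  by rewrite s1 s2.
apply/forallP/eqP => [h|h v]; last by rewrite key h mxE oppr0.
apply/rowP => v; rewrite [RHS]mxE; apply/eqP; rewrite -oppr_eq0 -key.
exact: h v.
Qed.
End Sw.


Section Cos.
Variables p n : nat.
Local Notation F := 'Z_(pdiv p).
Local Notation N := #|Pset n|.
Local Notation mtx := (@mtx p n).
Local Notation crd := (@crd p n).
Local Notation X := (@Xsw (pdiv p) n).
Local Notation W := (@Wset p n).
Local Notation pact := (@pact p n).
Local Notation actT := (@actT p n).
Local Notation lin := (@lin p n).

Definition cos (M : 'M[F]_n) := [set M + w | w in W].

Lemma in_cos M y : (y \in cos M) = (y - M \in W).
Proof.
apply/imsetP/idP => [[w wW ->]|yW]; first by rewrite addrC addKr.
by exists (y - M) => //; rewrite addrC subrK.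
Qed.

Lemma cos_eq M M' : (cos M == cos M') = (M - M' \in W).
Proof.
apply/eqP/idP => [E|MW].
  by rewrite -in_cos -E in_cos subrr W0.
apply/setP => y; rewrite !in_cos; apply/idP/idP => h.
  have -> : y - M' = (y - M) + (M - M') by rewrite subrKA.
  by rewrite WD.
have -> : y - M = (y - M') + - (M - M') by rewrite opprB subrKA.
by rewrite WD ?WN.
Qed.

Lemma actTE M s : actT M s = pact M s. Proof. by []. Qed.

Lemma setact_cos M s : setact actT (cos M) s = cos (pact M s).
Proof.
apply/setP => y; rewrite in_cos; apply/imsetP/idP => [[z]|yW].
  rewrite in_cos actTE => zW ->.
  by rewrite -pactN -pactD pact_W.
exists (pact y (s^-1)%g); last by rewrite actTE pactKV.
rewrite in_cos -(pactK M s) -pactN -pactD pact_W //.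
Qed.

Lemma iter_mu v k M : iter k (@mu (pdiv p) n v) M = M + k%:R *: X v.
Proof.
elim: k => [|k IH]; first by rewrite scale0r addr0.
by rewrite iterS IH /mu -addrA mulrSr scalerDl scale1r.
Qed.

Lemma switch_allE (k : 'I_n -> nat) (M : 'M[F]_n) :
  switch_all k M = M + lin (\row_v (k v)%:R).
Proof.
rewrite /switch_all /lin.
have -> : \sum_v (\row_v (k v)%:R : 'rV[F]_n) 0 v *: X v =
          \sum_(v <- enum 'I_n) (k v)%:R *: X v.
  by rewrite enumT; apply: eq_bigr => v _; rewrite mxE.
elim: (enum 'I_n) => [|v s IH] /=; first by rewrite big_nil addr0.
by rewrite big_cons iter_mu IH -addrA [_ *: _ + _]addrC.
Qed.

Lemma isoE (N0 M' : 'M[F]_n) : mx_iso N0 M' <-> exists s, M' = pact N0 s.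
Proof.
split=> [[s h]|[s ->]]; exists s.
  by apply/matrixP => i j; rewrite mxE -h !permKV.
by move=> i j; rewrite mxE !permK.
Qed.

Lemma asbE (P : Prop) : asb P <-> P.
Proof. by rewrite /asb; case: excluded_middle_informative. Qed.

Local Notation G := [set: {perm 'I_n}].

Lemma switchE (M M' : 'M[F]_n) : is_alt M -> is_alt M' ->
  switch_equiv M M' <-> cos M' \in orbit (actT^*)%act G (cos M).
Proof.
move=> aM aM'; split.
  case=> k [_ /isoE [s ->]]; apply/orbitP; exists s; rewrite ?inE //=.
  rewrite setact_cos switch_allE; apply/eqP; rewrite cos_eq pactD opprD addNKr.
  by apply/WN/pact_W/imsetP; exists (\row_v (k v)%:R).
case/orbitP => s _; rewrite /= setact_cos => /eqP; rewrite cos_eq => hW.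
have: pact (M' - pact M s) (s^-1)%g \in W.
  by apply: pact_W; rewrite -opprB WN.
case/imsetP => c _ Ec.
exists (fun v => addn (c 0 v) (Zp_trunc (pdiv p)).+2); split=> [v|]; first by rewrite addnS.
apply/isoE; exists s; rewrite switch_allE.
have -> : (\row_v (addn (c 0 v) (Zp_trunc (pdiv p)).+2)%:R : 'rV[F]_n) = c.
  apply/rowP => v; rewrite mxE; apply/val_inj.
  by rewrite Zp_nat /= modnDr modn_small.
by rewrite -Ec pactD pactKV addrC subrK.
Qed.
End Cos.


Lemma card_imset_eqrel (T U V : finType) (D : {set T}) (f : T -> U) (g : T -> V) :
  {in D &, forall x y, (f x == f y) = (g x == g y)} -> #|f @: D| = #|g @: D|.
Proof.
move=> h; pose fg x := (f x, g x).
have -> : f @: D = fst @: (fg @: D) by rewrite -imset_comp.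
have -> : g @: D = snd @: (fg @: D) by rewrite -imset_comp.
rewrite (card_in_imset (f := fst)) ?(card_in_imset (f := snd)) //.
  by move=> _ _ /imsetP[x xD ->] /imsetP[y yD ->] /= E; have := h x y xD yD; rewrite E eqxx => /eqP E'; rewrite /fg E E'.
by move=> _ _ /imsetP[x xD ->] /imsetP[y yD ->] /= E; have := h x y xD yD; rewrite E eqxx => /esym/eqP E'; rewrite /fg E E'.
Qed.

Section Count.
Variables p n : nat.
Local Notation F := 'Z_(pdiv p).
Local Notation N := #|Pset n|.
Local Notation mtx := (@mtx p n).
Local Notation crd := (@crd p n).
Local Notation W := (@Wset p n).
Local Notation pact := (@pact p n).
Local Notation actT := (@actT p n).
Local Notation cos := (@cos p n).
Local Notation G := [set: {perm 'I_n}].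

Definition Aset := [set M : 'M[F]_n | is_alt M].
Definition Eset := [set M : 'M[F]_n | is_alt M && is_eulerian M].
Definition Cset := [set cos M | M in Aset].

Lemma transfer (Q : pred 'M[F]_n) :
  #|[set M | is_alt M && Q M]| = #|[set x : 'rV[F]_N | Q (mtx x)]|.
Proof.
rewrite -(card_imset _ (@mtx_inj p n)); congr (#|pred_of_set _|).
apply/setP => M; rewrite inE; apply/andP/imsetP => [[aM QM]|[x]].
  by exists (crd M); rewrite ?inE mtxK.
by rewrite inE => Qx ->; split=> //; apply: alt_mtx.
Qed.

Lemma pact_eul M s : is_eulerian M -> is_eulerian (pact M s).
Proof.
move=> /forallP h; apply/forallP => i.
under eq_bigr => j _ do rewrite mxE.
by have := h ((s^-1)%g i); rewrite (reindex_inj (@perm_inj _ (s^-1)%g)).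
Qed.

Lemma pactE_in M s : (pact M s \in Eset) = (M \in Eset).
Proof.
rewrite !inE; apply/idP/idP => /andP[a e].
  by rewrite -(pactK M s) (pact_alt _ a) (pact_eul _ e).
by rewrite (pact_alt _ a) (pact_eul _ e).
Qed.

Lemma actsE : [acts G, on Eset | actT].
Proof. by apply/actsP => s _ M; apply: pactE_in. Qed.

Lemma actsC : [acts G, on Cset | (actT^*)%act].
Proof.
apply/actsP => s _ c /=; apply/imsetP/imsetP => [[M aM E]|[M aM ->]].
  exists (pact M (s^-1)%g); first by rewrite inE pact_alt // -inE.
  by rewrite -setact_cos -E (actK (actT^*)%act).
by exists (pact M s); rewrite ?setact_cos // inE pact_alt // -inE.
Qed.

Lemma t_countE : t_count (pdiv p) n = #|orbit actT G @: Eset|.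
Proof.
rewrite /t_count; congr (#|pred_of_set _|); apply: eq_in_imset => M.
rewrite inE => /andP[aM eM]; apply/setP => M'; rewrite !inE.
apply/idP/idP.
  case/andP => /andP[_ _] /asbE /isoE[s ->]; apply/orbitP; exists s => //.
case/orbitP => s _ <-; rewrite actTE.
have := pactE_in M s; rewrite !inE aM eM => /andP[-> ->] /=.
by apply/asbE/isoE; exists s.
Qed.

Lemma s_countE : s_count (pdiv p) n = #|orbit (actT^*)%act G @: Cset|.
Proof.
rewrite /s_count /Cset -imset_comp; apply: card_imset_eqrel => M M'.
rewrite !inE => aM aM'.
have clsE (M0 : 'M[F]_n) : is_alt M0 ->
  [set M1 : 'M[F]_n | is_alt M1 && asb (switch_equiv M0 M1)] =
  [set M1 : 'M[F]_n | is_alt M1 && (cos M1 \in orbit (actT^*)%act G (cos M0))].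
  move=> a0; apply/setP => M1; rewrite !inE; case a1: (is_alt M1) => //=.
  apply/idP/idP => [/asbE/switchE|h]; first by apply.
  by apply/asbE/switchE.
rewrite /= !clsE //; apply/eqP/eqP => [E|->] //.
have : M \in [set M1 | is_alt M1 && (cos M1 \in orbit (actT^*)%act G (cos M))].
  by rewrite inE aM orbit_refl.
rewrite E inE aM /= => /orbit_eqP; rewrite /= => ->.
by [].
Qed.

Lemma FC_W s :
  (#|('Fix_(Cset | (actT^*)%act)[s])%g| * #|W|)%N =
  #|[set M | is_alt M && (M - pact M s \in W)]|.
Proof.
symmetry.
rewrite -sum1_card (partition_big cos (mem ('Fix_(Cset | (actT^*)%act)[s])%g)) /=.
  rewrite -sum_nat_const; apply: eq_bigr => _ /setIP[/imsetP[M0 aM0 ->] fix0].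
  rewrite sum1dep_card.
  have -> : #|W| = #|[set M0 + w | w in W]| by symmetry; apply: card_imset => a b /addrI.
  congr (#|pred_of_set _|); apply/setP => M; rewrite !inE; apply/idP/idP.
    case/andP => /andP[aM _] /eqP E; apply/imsetP; exists (M - M0).
      by rewrite -in_cos -E in_cos subrr W0.
    by rewrite addrC subrK.
  case/imsetP => w wW ->; have aw := W_alt wW; rewrite inE in aM0.
  have ac := altD aM0 aw; rewrite ac /=.
  have ec : cos (M0 + w) = cos M0 by apply/eqP; rewrite cos_eq addrC addKr.
  rewrite ec eqxx andbT.
  move/afix1P: fix0; rewrite -ec /= setact_cos => /eqP; rewrite cos_eq.
  by rewrite -opprB => /WN; rewrite opprK.
move=> M; rewrite inE => /andP[aM hW]; rewrite inE; apply/andP; split.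
  by apply/imsetP; exists M; rewrite ?inE.
apply/afix1P; rewrite /= setact_cos; apply/eqP; rewrite cos_eq.
by rewrite -opprB WN.
Qed.

Lemma S1_cnt s : #|[set M | is_alt M && (M - pact M s \in W)]| =
  #|[set x : 'rV[F]_N | (x *m (1 - Pm p s) <= Bm p n)%MS]|.
Proof.
rewrite transfer; congr (#|pred_of_set _|); apply/setP => x; rewrite !inE.
rewrite pact_mtx inW; last by rewrite altD ?altN ?alt_mtx.
by rewrite crdD crdN !crdK mulmxBr mulmx1.
Qed.

Lemma FE_cnt s : #|('Fix_(Eset | actT)[s])%g| =
  #|[set x : 'rV[F]_N | (x *m Pm p s == x) && (x *m (Bm p n)^T == 0)]|.
Proof.
have -> : ('Fix_(Eset | actT)[s])%g =
   [set M | is_alt M && (is_eulerian M && (pact M s == M))].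
  apply/setP => M; rewrite !inE -andbA; congr [&& _, _ & _].
  by rewrite sub1set inE.
rewrite transfer; congr (#|pred_of_set _|); apply/setP => x; rewrite !inE.
by rewrite euler_mtx pact_mtx (inj_eq (@mtx_inj p n)) andbC.
Qed.

Lemma main_count : s_count (pdiv p) n = t_count (pdiv p) n.
Proof.
apply/eqP; rewrite -(eqn_pmul2r (cardG_gt0 [set: {perm 'I_n}]%G)).
rewrite s_countE t_countE -(Frobenius_Cauchy actsC) -(Frobenius_Cauchy actsE).
apply/eqP; apply: eq_bigr => s _.
have Wpos : (0 < #|W|)%N by apply/card_gt0P; exists 0; apply: W0.
apply/eqP; rewrite -(eqn_pmul2r Wpos) FC_W S1_cnt LA ?Pm_orth //.
by rewrite FE_cnt -card_W mulnC.
Qed.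
End Count.


Theorem theorem4p7 (l n : nat) : prime l -> (1 <= n)%N -> s_count l n = t_count l n.
Proof.
move=> pl _; rewrite -(pdiv_id pl); exact: main_count.
Qed.
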